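(* Let $(X,\|\cdot\|)$ be a real Banach space, $T\in(0,\infty]$, $a<0<b$. Let $f:\Omega(T,b)\to X$ satisfy hypothesis (LC) and let $g:\tilde\Omega(T,a,b)\to\mathbb R$ satisfy hypothesis (MJ) with respect to $f$. Fix $x\in X$ with $\|x\|<b$. Let $\varphi:(\alpha,\beta)\to X$ be the maximal solution of $y'=f(t,y)$, $y(0)=x$, and $\psi:(\tilde\alpha,\tilde\beta)\to\mathbb R$ the maximal solution of $z'=g(t,z)$, $z(0)=\|x\|$. Then $\tilde\beta\le\beta$ and $\|\varphi(t)\|\le\psi(t)$ for every $t\in[0,\tilde\beta)$.
   Context: $\tilde\Omega(T,a,b):=(-T,T)\times(a,b)\subset\mathbb R^2$ and $\Omega(T,b):=(-T,T)\times D(0,b)\subset\mathbb R\times X$, where $D(0,b)=\{y\in X:\|y\|<b\}$. Hypothesis (LC) for $f:\Omega(T,b)\to X$: $f$ is continuous and for every compact $K\subset\Omega(T,b)$ there is $C=C(K)>0$ with $\|f(t,y)-f(t,y')\|\le C\|y-y'\|$ for all $(t,y),(t,y')\in K$. Hypothesis (MJ) for $g:\tilde\Omega(T,a,b)\to\mathbb R$ with respect to $f$: (i) $g$ is continuous and locally Lipschitz continuous with respect to $z$; (ii) for every fixed $t\in[0,T)$ the map $[0,b)\ni z\mapsto g(t,z)$ is non-decreasing; (iii) $\|f(t,y)\|\le g(|t|,\|y\|)$ for all $(t,y)\in\Omega(T,b)$. Maximal solutions are solutions defined on the largest open interval containing $0$. *)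

(* Defs.v *)
From Stdlib Require Import Reals Lra List.
Open Scope R_scope.
Set Implicit Arguments.

Record Banach : Type := {
  BT :> Type;
  bzero : BT;
  badd : BT -> BT -> BT;
  bopp : BT -> BT;
  bscal : R -> BT -> BT;
  bnorm : BT -> R;
  badd_assoc : forall x y z, badd x (badd y z) = badd (badd x y) z;
  badd_comm : forall x y, badd x y = badd y x;
  badd_zero : forall x, badd x bzero = x;
  badd_opp : forall x, badd x (bopp x) = bzero;
  bscal_one : forall x, bscal 1 x = x;
  bscal_assoc : forall a c x, bscal a (bscal c x) = bscal (a * c) x;
  bscal_distr_v : forall a x y, bscal a (badd x y) = badd (bscal a x) (bscal a y);
  bscal_distr_s : forall a c x, bscal (a + c) x = badd (bscal a x) (bscal c x);
  bnorm_nonneg : forall x, 0 <= bnorm x;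
  bnorm_eq0 : forall x, bnorm x = 0 -> x = bzero;
  bnorm_scal : forall a x, bnorm (bscal a x) = Rabs a * bnorm x;
  bnorm_triangle : forall x y, bnorm (badd x y) <= bnorm x + bnorm y;
  bcomplete : forall u : nat -> BT,
    (forall eps, 0 < eps -> exists N, forall m n, (N <= m)%nat -> (N <= n)%nat ->
        bnorm (badd (u m) (bopp (u n))) < eps) ->
    exists l, forall eps, 0 < eps -> exists N, forall n, (N <= n)%nat ->
        bnorm (badd (u n) (bopp l)) < eps
}.
Arguments bzero {_}. Arguments badd {_}. Arguments bopp {_}.
Arguments bscal {_}. Arguments bnorm {_}.

Definition bsub (X : Banach) (x y : X) : X := badd x (bopp y).
Arguments bsub {X}.

(** Extended endpoints: [None] encodes +oo for upper bounds, -oo for lower bounds. *)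
Definition below (u : option R) (t : R) : Prop :=
  match u with Some u => t < u | None => True end.
Definition above (l : option R) (t : R) : Prop :=
  match l with Some l => l < t | None => True end.
Definition in_int (l u : option R) (t : R) : Prop := above l t /\ below u t.
Definition upper_le (u1 u2 : option R) : Prop :=
  match u1, u2 with
  | _, None => True
  | None, Some _ => False
  | Some x, Some y => x <= y
  end.
Definition lower_le (l1 l2 : option R) : Prop :=
  match l1, l2 with
  | None, _ => True
  | Some _, None => False
  | Some x, Some y => x <= y
  end.

Definition pos_ext (T : option R) : Prop :=
  match T with Some T => 0 < T | None => True end.

Definition Omega (X : Banach) (T : option R) (b : R) (t : R) (y : X) : Prop :=
  below T (Rabs t) /\ bnorm y < b.
Definition OmegaT (T : option R) (a b : R) (t z : R) : Prop :=
  below T (Rabs t) /\ a < z < b.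
Arguments Omega {X}.

Definition open_RX (X : Banach) (U : R -> X -> Prop) : Prop :=
  forall t y, U t y -> exists r, 0 < r /\
    forall s (z : X), Rabs (s - t) < r -> bnorm (bsub z y) < r -> U s z.
Arguments open_RX {X}.
Definition compact_RX (X : Banach) (K : R -> X -> Prop) : Prop :=
  forall (I : Type) (U : I -> R -> X -> Prop),
    (forall i, open_RX (U i)) ->
    (forall t (y : X), K t y -> exists i, U i t y) ->
    exists l : list I, forall t (y : X), K t y -> exists i, In i l /\ U i t y.
Arguments compact_RX {X}.

Definition hyp_LC (X : Banach) (T : option R) (b : R) (f : R -> X -> X) : Prop :=
  (forall t (y : X), Omega T b t y -> forall eps, 0 < eps -> exists delta, 0 < delta /\
     forall s (z : X), Omega T b s z -> Rabs (s - t) < delta -> bnorm (bsub z y) < delta ->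
       bnorm (bsub (f s z) (f t y)) < eps)
  /\
  (forall K : R -> X -> Prop, compact_RX K -> (forall t (y : X), K t y -> Omega T b t y) ->
     exists C, 0 < C /\ forall t (y y' : X), K t y -> K t y' ->
       bnorm (bsub (f t y) (f t y')) <= C * bnorm (bsub y y')).
Arguments hyp_LC {X}.

Definition hyp_MJ (X : Banach) (T : option R) (a b : R)
    (f : R -> X -> X) (g : R -> R -> R) : Prop :=
  (forall t z, OmegaT T a b t z -> forall eps, 0 < eps -> exists delta, 0 < delta /\
     forall s w, OmegaT T a b s w -> Rabs (s - t) < delta -> Rabs (w - z) < delta ->
       Rabs (g s w - g t z) < eps)
  /\
  (forall t0 z0, OmegaT T a b t0 z0 -> exists r L, 0 < r /\
     forall t z1 z2, OmegaT T a b t z1 -> OmegaT T a b t z2 ->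
       Rabs (t - t0) < r -> Rabs (z1 - z0) < r -> Rabs (z2 - z0) < r ->
       Rabs (g t z1 - g t z2) <= L * Rabs (z1 - z2))
  /\
  (forall t, 0 <= t -> below T t -> forall z1 z2, 0 <= z1 -> z1 <= z2 -> z2 < b ->
     g t z1 <= g t z2)
  /\
  (forall t (y : X), Omega T b t y -> bnorm (f t y) <= g (Rabs t) (bnorm y)).
Arguments hyp_MJ {X}.

Definition has_deriv (X : Banach) (phi : R -> X) (t : R) (v : X) : Prop :=
  forall eps, 0 < eps -> exists delta, 0 < delta /\
    forall h, h <> 0 -> Rabs h < delta ->
      bnorm (bsub (bscal (/ h) (bsub (phi (t + h)) (phi t))) v) < eps.
Arguments has_deriv {X}.

Definition is_sol (X : Banach) (T : option R) (b : R) (f : R -> X -> X) (x : X)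
    (al be : option R) (phi : R -> X) : Prop :=
  in_int al be 0 /\ phi 0 = x /\
  forall t, in_int al be t -> Omega T b t (phi t) /\ has_deriv phi t (f t (phi t)).
Arguments is_sol {X}.

Definition is_max_sol (X : Banach) (T : option R) (b : R) (f : R -> X -> X) (x : X)
    (al be : option R) (phi : R -> X) : Prop :=
  is_sol T b f x al be phi /\
  forall al' be' phi', is_sol T b f x al' be' phi' -> lower_le al al' /\ upper_le be' be.
Arguments is_max_sol {X}.

Definition is_solR (T : option R) (a b : R) (g : R -> R -> R) (z0 : R)
    (al be : option R) (psi : R -> R) : Prop :=
  in_int al be 0 /\ psi 0 = z0 /\
  forall t, in_int al be t -> OmegaT T a b t (psi t) /\ derivable_pt_lim psi t (g t (psi t)).

Definition is_max_solR (T : option R) (a b : R) (g : R -> R -> R) (z0 : R)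
    (al be : option R) (psi : R -> R) : Prop :=
  is_solR T a b g z0 al be psi /\
  forall al' be' psi', is_solR T a b g z0 al' be' psi' -> lower_le al al' /\ upper_le be' be.

(* Main.v *)
Require Import Defs.
From Stdlib Require Import ZArith Reals Lra Lia List Classical ClassicalEpsilon FunctionalExtensionality PropExtensionality.
From Coquelicot Require Import Coquelicot.
Import Defs.
Open Scope R_scope.

Set Implicit Arguments.
Arguments badd_assoc {_}. Arguments badd_comm {_}. Arguments badd_zero {_}. Arguments badd_opp {_}.
Arguments bscal_one {_}. Arguments bscal_assoc {_}. Arguments bscal_distr_v {_}. Arguments bscal_distr_s {_}.
Arguments bnorm_nonneg {_}. Arguments bnorm_eq0 {_}. Arguments bnorm_scal {_}. Arguments bnorm_triangle {_}.
Arguments bcomplete {_}.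

Section Inst.
Variable X : Banach.

Definition X_AM : AbelianMonoid.mixin_of (BT X) :=
  AbelianMonoid.Mixin (BT X) (@badd X) bzero (@badd_comm X) (@badd_assoc X) (@badd_zero X).
Definition X_AMt : AbelianMonoid := AbelianMonoid.Pack (BT X) X_AM (BT X).
Definition X_AG : AbelianGroup.mixin_of X_AMt :=
  AbelianGroup.Mixin X_AMt (@bopp X) (@badd_opp X).
Definition X_AGc : AbelianGroup.class_of (BT X) := AbelianGroup.Class _ X_AM X_AG.
Definition X_AGt : AbelianGroup := AbelianGroup.Pack (BT X) X_AGc (BT X).
Definition X_MS : ModuleSpace.mixin_of R_Ring X_AGt :=
  ModuleSpace.Mixin R_Ring X_AGt (@bscal X) (@bscal_assoc X) (@bscal_one X)
    (@bscal_distr_v X) (@bscal_distr_s X).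
Definition X_MSc : ModuleSpace.class_of R_Ring (BT X) := ModuleSpace.Class _ _ X_AGc X_MS.

Definition Xball (x : BT X) (e : R) (y : BT X) := bnorm (bsub y x) < e.

Lemma bscal0 (x : BT X) : bscal 0 x = bzero.
Proof.
  assert (H : badd (bscal 0 x) (bscal 0 x) = bscal 0 x).
  { rewrite <- bscal_distr_s. f_equal; ring. }
  set (u := bscal 0 x) in *.
  symmetry. transitivity (badd (badd u u) (bopp u)). rewrite H, badd_opp. reflexivity.
  rewrite <- badd_assoc, badd_opp, badd_zero. reflexivity.
Qed.

Lemma bopp_scal (x : BT X) : bopp x = bscal (-1) x.
Proof.
  assert (H : badd x (bscal (-1) x) = bzero).
  { rewrite <- (bscal_one x) at 1. rewrite <- bscal_distr_s.
    replace (1 + -1) with 0 by ring. apply bscal0. }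
  rewrite <- (badd_zero (bopp x)). rewrite <- H.
  rewrite badd_assoc. rewrite (badd_comm (bopp x) x). rewrite badd_opp.
  rewrite badd_comm, badd_zero. reflexivity.
Qed.

Lemma bnorm_opp (x : BT X) : bnorm (bopp x) = bnorm x.
Proof. rewrite bopp_scal, bnorm_scal. replace (Rabs (-1)) with 1. ring. rewrite Rabs_left; lra. Qed.

Lemma bsub_sym (x y : BT X) : bnorm (bsub x y) = bnorm (bsub y x).
Proof.
  unfold bsub. rewrite <- bnorm_opp. f_equal.
  rewrite !bopp_scal, bscal_distr_v, bscal_assoc.
  replace (-1 * -1) with 1 by ring. rewrite bscal_one. apply badd_comm.
Qed.

Lemma bsub_tri (x y z : BT X) : bnorm (bsub x z) <= bnorm (bsub x y) + bnorm (bsub y z).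
Proof.
  replace (bsub x z) with (badd (bsub x y) (bsub y z)). apply bnorm_triangle.
  unfold bsub. rewrite <- badd_assoc. f_equal. rewrite badd_assoc.
  rewrite (badd_comm (bopp y) y), badd_opp. rewrite badd_comm. apply badd_zero.
Qed.

Lemma bsub_self (x : BT X) : bsub x x = bzero.
Proof. apply badd_opp. Qed.

Definition X_US : UniformSpace.mixin_of (BT X).
Proof.
  refine (UniformSpace.Mixin (BT X) bzero Xball _ _ _).
  - intros x e. unfold Xball. rewrite bsub_self.
    replace (bnorm (@bzero X)) with 0. apply cond_pos.
    rewrite <- (bscal0 bzero), bnorm_scal, Rabs_R0. ring.
  - intros x y e. unfold Xball. rewrite bsub_sym. auto.
  - intros x y z e1 e2. unfold Xball. intros H1 H2.
    pose proof (bsub_tri z y x). lra.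
Defined.

Definition X_NMAc : NormedModuleAux.class_of R_AbsRing (BT X) :=
  NormedModuleAux.Class _ _ X_MSc X_US.
Definition X_NMAt : NormedModuleAux R_AbsRing := NormedModuleAux.Pack _ (BT X) X_NMAc (BT X).

Definition X_NM : NormedModule.mixin_of R_AbsRing X_NMAt.
Proof.
  refine (NormedModule.Mixin R_AbsRing X_NMAt (@bnorm X) 1 _ _ _ _ _).
  - intros. apply bnorm_triangle.
  - intros l x. right. apply (bnorm_scal l x).
  - intros x y eps H. exact H.
  - intros x y eps H. rewrite Rmult_1_l. exact H.
  - intros x H. apply bnorm_eq0, H.
Defined.

Definition X_NMc : NormedModule.class_of R_AbsRing (BT X) := NormedModule.Class _ _ X_NMAc X_NM.
Definition X_NMt : NormedModule R_AbsRing := NormedModule.Pack _ (BT X) X_NMc (BT X).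
Definition X_USt : UniformSpace := UniformSpace.Pack (BT X) X_US (BT X).

Definition Xlim (F : (BT X -> Prop) -> Prop) : BT X :=
  epsilon (inhabits bzero) (fun l => forall eps : posreal, F (Xball l eps)).

Lemma pow2_small : forall e, 0 < e -> exists n, / 2 ^ n < e.
Proof.
  intros e He. destruct (archimed (/ e)) as [H1 _].
  destruct (Rle_or_lt 0 (IZR (up (/e)))) as [Hp|Hn].
  2:{ pose proof (Rinv_0_lt_compat e He). lra. }
  exists (Z.to_nat (up (/ e))).
  assert (INR (Z.to_nat (up (/e))) = IZR (up (/e))).
  { rewrite INR_IZR_INZ. rewrite Z2Nat.id. reflexivity. apply le_IZR. exact Hp. }
  set (n := Z.to_nat (up (/e))) in *.
  assert (Hn : INR n < 2 ^ n).
  { clear. induction n. simpl. lra. rewrite S_INR. simpl.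
    assert (1 <= 2 ^ n) by (apply pow_R1_Rle; lra). lra. }
  assert (/ e < 2 ^ n) by lra.
  rewrite <- (Rinv_inv e). apply Rinv_lt_contravar.
  apply Rmult_lt_0_compat. apply Rinv_0_lt_compat; lra. apply pow_lt; lra. exact H0.
Qed.

Lemma Xcomplete_seq (u : nat -> BT X) :
  (forall eps, 0 < eps -> exists N, forall m n, (N <= m)%nat -> (N <= n)%nat ->
        bnorm (bsub (u m) (u n)) < eps) ->
    exists l, forall eps, 0 < eps -> exists N, forall n, (N <= n)%nat ->
        bnorm (bsub (u n) l) < eps.
Proof. apply bcomplete. Qed.

Lemma Xlim_spec (F : (BT X -> Prop) -> Prop) :
  ProperFilter F -> (forall eps : posreal, exists x, F (Xball x eps)) ->
  forall eps : posreal, F (Xball (Xlim F) eps).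
Proof.
  intros PF HC. unfold Xlim. apply epsilon_spec.
  assert (Hx : forall n : nat, exists x, F (Xball x (/ 2 ^ n))).
  { intro n. assert (0 < / 2 ^ n) by (apply Rinv_0_lt_compat, pow_lt; lra).
    exact (HC (mkposreal _ H)). }
  destruct (choice _ Hx) as [u Hu].
  assert (Hd : forall n m, bnorm (bsub (u n) (u m)) < / 2 ^ n + / 2 ^ m).
  { intros n m. destruct PF as [PF1 PF2].
    destruct (PF1 _ (filter_and _ _ (Hu n) (Hu m))) as [y [Hy1 Hy2]].
    unfold Xball in *. pose proof (bsub_tri (u n) y (u m)). rewrite (bsub_sym (u n) y) in H. lra. }
  assert (Hmono : forall n m, (n <= m)%nat -> / 2 ^ m <= / 2 ^ n).
  { intros n m Hnm. apply Rinv_le_contravar. apply pow_lt; lra. apply Rle_pow; lra || auto. }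
  destruct (Xcomplete_seq u) as [l Hl].
  { intros eps He. destruct (@pow2_small (eps/2)) as [N HN]; [lra|].
    exists N. intros m n Hm Hn. pose proof (Hd m n). pose proof (Hmono _ _ Hm). pose proof (Hmono _ _ Hn). lra. }
  exists l. intros eps.
  destruct (@pow2_small (eps/2)) as [N1 HN1]; [destruct eps; simpl; lra|].
  destruct (Hl (eps/2)) as [N2 HN2]; [destruct eps; simpl; lra|].
  set (n := max N1 N2).
  apply filter_imp with (2 := Hu n). intros y Hy. unfold Xball in *.
  pose proof (bsub_tri y (u n) l). pose proof (HN2 n (Nat.le_max_r _ _)).
  pose proof (Hmono N1 n (Nat.le_max_l _ _)). lra.
Qed.

Definition X_CS : CompleteSpace.mixin_of X_USt.
Proof.
  refine (CompleteSpace.Mixin X_USt Xlim _ _).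
  - intros F PF HC eps. apply Xlim_spec; auto.
  - intros F1 F2 H12 H21. assert (F1 = F2).
    { apply functional_extensionality. intro P. apply propositional_extensionality. split; auto. }
    subst. intro e. apply (UniformSpace.ax1 _ X_US).
Defined.

Definition X_CNMc : CompleteNormedModule.class_of R_AbsRing (BT X) :=
  CompleteNormedModule.Class _ _ X_NMc X_CS.
Definition CX : CompleteNormedModule R_AbsRing := CompleteNormedModule.Pack _ (BT X) X_CNMc (BT X).

End Inst.
Canonical X_AMt. Canonical X_AGt. Canonical X_USt. Canonical X_NMAt. Canonical X_NMt. Canonical CX.
Definition X_MSt (X : Banach) : ModuleSpace R_Ring := ModuleSpace.Pack R_Ring (BT X) (X_MSc X) (BT X).
Canonical X_MSt.

Lemma test (X : Banach) (x y : CX X) : norm (minus x y) = bnorm (bsub x y).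
Proof. reflexivity. Qed.
Arguments bscal0 {X}. Arguments bopp_scal {X}. Arguments bnorm_opp {X}. Arguments bsub_sym {X}.
Arguments bsub_tri {X}. Arguments bsub_self {X}. Arguments Xcomplete_seq {X}.


Unset Implicit Arguments.

Lemma real_ind (c d : R) (P : R -> Prop) : c <= d ->
  (forall s, c <= s <= d -> (forall s', c <= s' < s -> P s') -> P s) ->
  (forall s, c <= s < d -> (forall s', c <= s' <= s -> P s') ->
       exists del, 0 < del /\ forall s', s < s' < s + del -> P s') ->
  forall s, c <= s <= d -> P s.
Proof.
  intros Hcd H1 H2.
  set (E := fun s => c <= s <= d /\ forall s', c <= s' <= s -> P s').
  assert (Hb : bound E). { exists d. intros s [Hs _]. lra. }
  assert (Hc : E c).
  { split. lra. intros s' Hs'. replace s' with c by lra. apply H1. lra. intros; lra. }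
  destruct (completeness E Hb (ex_intro _ c Hc)) as [sg [Hub Hlub]].
  assert (Hsg1 : c <= sg) by (apply Hub; exact Hc).
  assert (Hsg2 : sg <= d) by (apply Hlub; intros s [Hs _]; lra).
  assert (Hbelow : forall s', c <= s' < sg -> P s').
  { intros s' Hs'. apply NNPP; intro HP.
    assert (sg <= s'). { apply Hlub. intros s [Hs HPs]. destruct (Rle_or_lt s s'). auto.
      exfalso. apply HP, HPs. lra. }
    lra. }
  assert (Hsg : E sg).
  { split. lra. intros s' Hs'. destruct (Rle_lt_or_eq_dec s' sg). lra.
    apply Hbelow; lra. subst. apply H1. lra. intros; apply Hbelow; lra. }
  assert (Hd : sg = d).
  { destruct (Rle_lt_or_eq_dec sg d Hsg2) as [Hlt|]; auto. exfalso.
    destruct (H2 sg) as [del [Hdel HP]]. lra. apply Hsg.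
    set (s1 := Rmin (sg + del/2) d).
    assert (E s1).
    { unfold s1. split. split. apply Rmin_glb; lra. apply Rmin_r.
      intros s' Hs'. destruct (Rle_or_lt s' sg). apply Hsg; lra.
      apply HP. split. lra. pose proof (Rmin_l (sg + del/2) d). lra. }
    pose proof (Hub s1 H). unfold s1 in H0.
    destruct (Rle_dec (sg+del/2) d). rewrite Rmin_left in H0; lra. rewrite Rmin_right in H0; lra. }
  intros s Hs. subst. apply Hsg. lra.
Qed.

Lemma dini_mvt (h : R -> R) (c d K : R) : c <= d ->
  (forall s, c <= s <= d -> continuity_pt h s) ->
  (forall s, c <= s < d -> forall eps, 0 < eps -> exists del, 0 < del /\
      forall k, 0 < k < del -> h (s + k) - h s <= (K + eps) * k) ->
  h d - h c <= K * (d - c).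
Proof.
  intros Hcd Hcont HD.
  assert (forall eps, 0 < eps -> h d - h c <= (K + eps) * (d - c)).
  { intros eps He.
    apply (real_ind c d (fun s => h s - h c <= (K + eps) * (s - c))); auto; [| |lra].
    - intros s Hs Hlt. apply Rnot_lt_le. intro Hgt.
      destruct (Rle_lt_or_eq_dec c s (proj1 Hs)) as [Hcs|Hcs].
      2:{ subst. lra. }
      set (gap := h s - h c - (K + eps) * (s - c)).
      destruct (Hcont s Hs (gap / 2)) as [alp [Halp Hal]]. unfold gap; lra.
      set (m := Rabs (K + eps) + 1).
      set (s' := Rmax c (s - Rmin (alp / 2) (gap / (2 * m)))).
      assert (Hm : 0 < m) by (unfold m; pose proof (Rabs_pos (K+eps)); lra).
      assert (Hr : 0 < Rmin (alp / 2) (gap / (2 * m))).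
      { apply Rmin_glb_lt. lra. apply Rdiv_lt_0_compat. unfold gap; lra. lra. }
      assert (Hs' : c <= s' < s).
      { unfold s'. split. apply Rmax_l. apply Rmax_lub_lt; lra. }
      pose proof (Hlt s' Hs') as H1.
      assert (Hd : s - s' <= Rmin (alp / 2) (gap / (2 * m))).
      { unfold s'. pose proof (Rmax_r c (s - Rmin (alp / 2) (gap / (2 * m)))). lra. }
      assert (H2 : Rabs (h s' - h s) < gap / 2).
      { apply (Hal s'). split. split. exact I. lra. simpl. unfold R_dist.
        rewrite Rabs_left by lra. pose proof (Rmin_l (alp/2) (gap / (2*m))). lra. }
      apply Rabs_def2 in H2.
      assert (H3 : m * (s - s') <= gap / 2).
      { apply Rle_trans with (m * (gap / (2 * m))).
        apply Rmult_le_compat_l. lra. pose proof (Rmin_r (alp/2) (gap / (2*m))). lra.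
        right. field. lra. }
      assert (H4 : - (m * (s - s')) <= (K + eps) * (s - s')).
      { assert (- m <= K + eps) by (unfold m; pose proof (Rle_abs (-(K+eps))); rewrite Rabs_Ropp in H; lra).
        nra. }
      unfold gap in *. lra.
    - intros s Hs Hle. destruct (HD s Hs eps He) as [del [Hdel Hk]].
      exists del. split. auto. intros s' Hs'.
      pose proof (Hk (s' - s) ltac:(lra)). replace (s + (s' - s)) with s' in H by ring.
      pose proof (Hle s ltac:(lra)). nra. }
  destruct (Rle_lt_or_eq_dec c d Hcd) as [Hlt|Heq].
  - apply Rnot_lt_le. intro Hgt.
    set (eps := (h d - h c - K * (d - c)) / (2 * (d - c))).
    assert (0 < eps). { unfold eps. apply Rdiv_lt_0_compat; lra. }
    pose proof (H eps H0). unfold eps in H1.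
    assert ((h d - h c - K * (d - c)) / (2 * (d - c)) * (d - c) = (h d - h c - K * (d - c)) / 2)
      by (field; lra). nra.
  - subst. lra.
Qed.

Lemma cont_pt_of (f : R -> R) (x : R) :
  (forall eps, 0 < eps -> exists del, 0 < del /\ forall y, Rabs (y - x) < del -> Rabs (f y - f x) < eps) ->
  continuity_pt f x.
Proof.
  intros H eps He. destruct (H eps He) as [del [Hd Hy]]. exists del. split. auto.
  intros y [_ Hy']. apply Hy. exact Hy'.
Qed.

Lemma cont_pt_to (f : R -> R) (x : R) : continuity_pt f x ->
  forall eps, 0 < eps -> exists del, 0 < del /\ forall y, Rabs (y - x) < del -> Rabs (f y - f x) < eps.
Proof.
  intros H eps He. destruct (H eps He) as [del [Hd Hy]]. exists del. split. auto.
  intros y Hy'. destruct (Req_dec y x). subst. rewrite Rminus_diag, Rabs_R0. auto.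
  apply Hy. split. split. exact I. auto. exact Hy'.
Qed.


Set Implicit Arguments.

Section Alg.
Arguments bsub_tri {X}. Arguments bsub_self {X}. Arguments bsub_sym {X}.
Variable X : Banach.
Implicit Types x y z v w : BT X.
Notation V := (X_NMt X).

Lemma bnorm_zero : bnorm (@bzero X) = 0.
Proof. exact (@norm_zero R_AbsRing (X_NMt X)). Qed.

Lemma bsub_plus_l z x y : bsub (badd z x) (badd z y) = bsub x y.
Proof.
  change (@minus (X_NMt X) (plus (z : X_NMt X) x) (plus (z : X_NMt X) y) = minus (x : X_NMt X) y).
  unfold minus. rewrite (@opp_plus V), ((@plus_comm V) z x), <- (@plus_assoc V). f_equal.
  rewrite (@plus_assoc V), (@plus_opp_r V). apply (@plus_zero_l V).
Qed.

Lemma bsub_zero_r x : bsub x bzero = x.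
Proof. change (@minus (X_NMt X) x zero = (x : X_NMt X)). apply (@minus_zero_r V). Qed.

Lemma norm_le_sub x y : bnorm x <= bnorm (bsub x y) + bnorm y.
Proof. pose proof (bsub_tri x y bzero). rewrite !bsub_zero_r in H. exact H. Qed.

Lemma norm_rev x y : Rabs (bnorm x - bnorm y) <= bnorm (bsub x y).
Proof.
  apply Rabs_le. pose proof (norm_le_sub x y). pose proof (norm_le_sub y x).
  rewrite bsub_sym in H0. lra.
Qed.

Lemma bscal_sub a x y : bscal a (bsub x y) = bsub (bscal a x) (bscal a y).
Proof. change (@scal _ (X_NMt X) a (minus (x : X_NMt X) y) = minus (scal a (x : X_NMt X)) (scal a (y : X_NMt X))). apply (@scal_minus_distr_l R_Ring V). Qed.

Lemma bsub_sub_sub x y z : bsub (bsub x z) (bsub y z) = bsub x y.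
Proof.
  change (@minus (X_NMt X) (minus (x : X_NMt X) z) (minus (y : X_NMt X) z) = minus (x : X_NMt X) y).
  unfold minus. rewrite (@opp_plus V), (@opp_opp V). rewrite <- (@plus_assoc V). f_equal.
  rewrite (@plus_comm V). rewrite <- (@plus_assoc V). rewrite (@plus_opp_r V). apply (@plus_zero_r V).
Qed.

Lemma bscal_scal_inv h w : h <> 0 -> bscal h (bscal (/ h) w) = w.
Proof. intro H. rewrite bscal_assoc. rewrite Rinv_r by auto. apply bscal_one. Qed.

Lemma bscal_zero_l x : bscal 0 x = bzero.
Proof. apply bscal0. Qed.

Lemma bnorm_small x : (forall e, 0 < e -> bnorm x <= e) -> x = bzero.
Proof.
  intro H. apply bnorm_eq0. apply Rle_antisym. apply Rnot_lt_le. intro Hp.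
  pose proof (H (bnorm x / 2) ltac:(lra)). lra. apply bnorm_nonneg.
Qed.

Lemma bsub_eq0 x y : bsub x y = bzero -> x = y.
Proof.
  intro H. change (@minus (X_NMt X) x y = zero) in H. change (x = y :> X_NMt X).
  apply (@plus_reg_r V) with (opp y). rewrite (@plus_opp_r V). exact H.
Qed.

Lemma badd_sub x y : badd x (bsub y x) = y.
Proof.
  change (@plus (X_NMt X) x (minus (y : X_NMt X) x) = y). unfold minus.
  rewrite (@plus_comm V), <- (@plus_assoc V), (@plus_opp_l V). apply (@plus_zero_r V).
Qed.

End Alg.
Arguments bnorm_zero {X}. Arguments bsub_plus_l {X}. Arguments bsub_zero_r {X}. Arguments norm_le_sub {X}.
Arguments norm_rev {X}. Arguments bscal_sub {X}. Arguments bsub_sub_sub {X}. Arguments bscal_scal_inv {X}.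
Arguments bscal_zero_l {X}. Arguments bnorm_small {X}. Arguments bsub_eq0 {X}. Arguments badd_sub {X}.

Definition dif (X : Banach) (phi : R -> X) (t : R) (v : X) : Prop :=
  forall eps, 0 < eps -> exists del, 0 < del /\ forall s, Rabs (s - t) < del ->
    bnorm (bsub (bsub (phi s) (phi t)) (bscal (s - t) v)) <= eps * Rabs (s - t).
Arguments dif {X}.

Lemma has_deriv_dif (X : Banach) (phi : R -> X) t v : has_deriv phi t v -> dif phi t v.
Proof.
  intros H eps He. destruct (H eps He) as [del [Hd Hh]]. exists del. split. auto.
  intros s Hs. destruct (Req_dec s t) as [->|Hne].
  - rewrite bsub_self, Rminus_diag, bscal_zero_l, bsub_self, bnorm_zero. rewrite Rabs_R0. lra.
  - assert (Hh' := Hh (s - t) ltac:(lra) Hs). replace (t + (s - t)) with s in Hh' by ring.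
    rewrite <- (bscal_scal_inv (s - t) (bsub (bsub (phi s) (phi t)) (bscal (s - t) v))) by lra.
    rewrite bnorm_scal. rewrite bscal_sub, bscal_assoc.
    replace (/ (s - t) * (s - t)) with 1 by (field; lra). rewrite bscal_one.
    pose proof (Rabs_pos (s-t)). nra.
Qed.

Lemma dif_has_deriv (X : Banach) (phi : R -> X) t v : dif phi t v -> has_deriv phi t v.
Proof.
  intros H eps He. destruct (H (eps/2) ltac:(lra)) as [del [Hd Hh]]. exists del. split. auto.
  intros h Hh0 Hhd. assert (Hs := Hh (t + h) ltac:(replace (t+h-t) with h by ring; auto)).
  replace (t + h - t) with h in Hs by ring.
  replace (bsub (bscal (/ h) (bsub (phi (t + h)) (phi t))) v) with
     (bscal (/ h) (bsub (bsub (phi (t + h)) (phi t)) (bscal h v))).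
  2:{ rewrite bscal_sub, bscal_assoc. replace (/ h * h) with 1 by (field; auto). rewrite bscal_one. reflexivity. }
  rewrite bnorm_scal. rewrite Rabs_inv.
  assert (0 < Rabs h) by (apply Rabs_pos_lt; auto).
  apply Rle_lt_trans with (/ Rabs h * (eps / 2 * Rabs h)).
  apply Rmult_le_compat_l. left; apply Rinv_0_lt_compat; auto. auto.
  replace (/ Rabs h * (eps / 2 * Rabs h)) with (eps/2) by (field; lra). lra.
Qed.

Definition contX (X : Banach) (phi : R -> X) (t : R) : Prop :=
  forall eps, 0 < eps -> exists del, 0 < del /\ forall s, Rabs (s - t) < del ->
    bnorm (bsub (phi s) (phi t)) < eps.
Arguments contX {X}.

Lemma dif_cont (X : Banach) (phi : R -> X) t v : dif phi t v -> contX phi t.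
Proof.
  intros H eps He. destruct (H 1 ltac:(lra)) as [del [Hd Hh]].
  set (m := 1 + bnorm v).
  assert (Hm : 0 < m) by (unfold m; pose proof (bnorm_nonneg v); lra).
  exists (Rmin del (eps / (2 * m))). split. apply Rmin_glb_lt; auto. apply Rdiv_lt_0_compat; lra.
  intros s Hs. pose proof (Rmin_l del (eps / (2*m))). pose proof (Rmin_r del (eps / (2*m))).
  specialize (Hh s ltac:(lra)).
  pose proof (norm_le_sub (bsub (phi s) (phi t)) (bscal (s - t) v)).
  rewrite bnorm_scal in H2.
  assert (Rabs (s - t) * m < eps).
  { apply Rle_lt_trans with (eps / (2*m) * m). apply Rmult_le_compat_r; lra.
    replace (eps / (2 * m) * m) with (eps / 2) by (field; lra). lra. }
  unfold m in H3. pose proof (Rabs_pos (s - t)). nra.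
Qed.

Lemma norm_cont_pt (X : Banach) (phi : R -> X) t : contX phi t -> continuity_pt (fun s => bnorm (phi s)) t.
Proof.
  intro H. apply cont_pt_of. intros eps He. destruct (H eps He) as [del [Hd Hh]].
  exists del. split. auto. intros y Hy. eapply Rle_lt_trans. apply norm_rev. apply Hh, Hy.
Qed.

Lemma vec_mvt (X : Banach) (phi : R -> X) (c d K : R) : c <= d ->
  (forall s, c <= s <= d -> contX phi s) ->
  (forall s, c <= s < d -> exists v, dif phi s v /\ bnorm v <= K) ->
  bnorm (bsub (phi d) (phi c)) <= K * (d - c).
Proof.
  intros Hcd Hc Hd.
  pose (h := fun s => bnorm (bsub (phi s) (phi c))).
  assert (h d - h c <= K * (d - c)).
  { apply dini_mvt. auto.
    - intros s Hs. apply cont_pt_of. intros eps He. destruct (Hc s Hs eps He) as [del [H1 H2]].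
      exists del. split. auto. intros y Hy. unfold h.
      eapply Rle_lt_trans. apply norm_rev. rewrite bsub_sub_sub. apply H2, Hy.
    - intros s Hs eps He. destruct (Hd s Hs) as [v [Hv Hvn]].
      destruct (Hv eps He) as [del [H1 H2]]. exists del. split. auto.
      intros k Hk. specialize (H2 (s + k) ltac:(replace (s+k-s) with k by ring; rewrite Rabs_right; lra)).
      replace (s + k - s) with k in H2 by ring. rewrite Rabs_right in H2 by lra.
      unfold h. eapply Rle_trans. pose proof (norm_rev (bsub (phi (s + k)) (phi c)) (bsub (phi s) (phi c))).
      apply Rabs_le_between in H. apply H. rewrite bsub_sub_sub.
      pose proof (norm_le_sub (bsub (phi (s + k)) (phi s)) (bscal k v)).
      rewrite bnorm_scal, Rabs_right in H by lra. nra. }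
  unfold h in H. rewrite bsub_self, bnorm_zero in H. lra.
Qed.


Unset Implicit Arguments.

Lemma Rabs_le_between' x y : Rabs x <= y -> -y <= x <= y.
Proof. intro H. pose proof (Rle_abs x). pose proof (Rle_abs (-x)). rewrite Rabs_Ropp in H1. lra. Qed.

Lemma Rmax0_lip a b : Rabs (Rmax a 0 - Rmax b 0) <= Rabs (a - b).
Proof.
  unfold Rmax. destruct (Rle_dec a 0), (Rle_dec b 0); apply Rabs_le; split;
  try (apply Rabs_le_between; apply Rle_refl); pose proof (Rle_abs (a-b)); pose proof (Rle_abs (-(a-b)));
  rewrite Rabs_Ropp in *; lra.
Qed.

Lemma cont_sub_max (u p : R -> R) x : continuity_pt u x -> continuity_pt p x ->
  continuity_pt (fun t => Rmax (u t - p t) 0) x.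
Proof.
  intros Hu Hp. apply cont_pt_of. intros eps He.
  destruct (cont_pt_to u x Hu (eps/2) ltac:(lra)) as [d1 [Hd1 H1]].
  destruct (cont_pt_to p x Hp (eps/2) ltac:(lra)) as [d2 [Hd2 H2]].
  exists (Rmin d1 d2). split. apply Rmin_glb_lt; auto. intros y Hy.
  eapply Rle_lt_trans. apply Rmax0_lip.
  pose proof (H1 y ltac:(pose proof (Rmin_l d1 d2); lra)).
  pose proof (H2 y ltac:(pose proof (Rmin_r d1 d2); lra)).
  apply Rabs_def2 in H. apply Rabs_def2 in H0. apply Rabs_def1; lra.
Qed.

Lemma compare (u p : R -> R) (G : R -> R -> R) (c d : R) :
  c <= d ->
  (forall s, c <= s <= d -> continuity_pt u s) ->
  (forall s, c <= s <= d -> continuity_pt p s) ->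
  u c <= p c ->
  (forall s, c <= s < d -> forall eps, 0 < eps -> exists del, 0 < del /\
     forall k, 0 < k < del -> u (s + k) - u s <= (G s (u s) + eps) * k) ->
  (forall s, c <= s < d -> forall eps, 0 < eps -> exists del, 0 < del /\
     forall k, 0 < k < del -> (G s (p s) - eps) * k <= p (s + k) - p s) ->
  (forall s, c <= s < d -> exists r L, 0 < r /\ 0 <= L /\ forall t z1 z2, s <= t < s + r ->
     Rabs (z1 - p s) < r -> Rabs (z2 - p s) < r -> Rabs (G t z1 - G t z2) <= L * Rabs (z1 - z2)) ->
  forall s, c <= s <= d -> u s <= p s.
Proof.
  intros Hcd Hu Hp H0 HDu HDp HL.
  apply (real_ind c d (fun s => u s <= p s)); auto.
  - intros s Hs Hlt. destruct (Rle_lt_or_eq_dec c s (proj1 Hs)) as [Hcs|<-]; auto.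
    apply Rnot_lt_le. intro Hgt. set (gap := u s - p s).
    destruct (cont_pt_to u s (Hu s Hs) (gap/2) ltac:(unfold gap; lra)) as [d1 [Hd1 H1]].
    destruct (cont_pt_to p s (Hp s Hs) (gap/2) ltac:(unfold gap; lra)) as [d2 [Hd2 H2]].
    set (s' := Rmax c (s - Rmin d1 d2 / 2)).
    assert (Hm := Rmin_glb_lt d1 d2 0 Hd1 Hd2).
    assert (Hs' : c <= s' < s) by (unfold s'; split; [apply Rmax_l| apply Rmax_lub_lt; lra]).
    assert (Hds : Rabs (s' - s) < Rmin d1 d2).
    { rewrite Rabs_left by lra. unfold s'. pose proof (Rmax_r c (s - Rmin d1 d2 / 2)). lra. }
    pose proof (H1 s' ltac:(pose proof (Rmin_l d1 d2); lra)).
    pose proof (H2 s' ltac:(pose proof (Rmin_r d1 d2); lra)).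
    apply Rabs_def2 in H. apply Rabs_def2 in H3. pose proof (Hlt s' Hs'). unfold gap in *. lra.
  - intros s Hs Hle. assert (Hus : u s <= p s) by (apply Hle; lra).
    destruct (Rle_lt_or_eq_dec _ _ Hus) as [Hlt|Heq].
    + set (gap := p s - u s).
      destruct (cont_pt_to u s (Hu s ltac:(lra)) (gap/2) ltac:(unfold gap; lra)) as [d1 [Hd1 H1]].
      destruct (cont_pt_to p s (Hp s ltac:(lra)) (gap/2) ltac:(unfold gap; lra)) as [d2 [Hd2 H2]].
      exists (Rmin d1 d2). split. apply Rmin_glb_lt; auto. intros s' Hs'.
      pose proof (H1 s' ltac:(rewrite Rabs_right by lra; pose proof (Rmin_l d1 d2); lra)) as Q1.
      pose proof (H2 s' ltac:(rewrite Rabs_right by lra; pose proof (Rmin_r d1 d2); lra)) as Q2.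
      apply Rabs_def2 in Q1. apply Rabs_def2 in Q2. unfold gap in *. lra.
    + destruct (HL s Hs) as [r [L [Hr [HL0 HLip]]]].
      destruct (cont_pt_to u s (Hu s ltac:(lra)) r Hr) as [d1 [Hd1 H1]].
      destruct (cont_pt_to p s (Hp s ltac:(lra)) r Hr) as [d2 [Hd2 H2]].
      set (eta := Rmin (Rmin (r/2) (Rmin (d1/2) (d2/2))) (Rmin (/ (2 * (L + 1))) (d - s))).
      assert (HLp : 0 < / (2 * (L+1))) by (apply Rinv_0_lt_compat; lra).
      assert (Heta : 0 < eta).
      { unfold eta. repeat apply Rmin_glb_lt; lra. }
      assert (He1 : eta <= r/2) by (unfold eta; eapply Rle_trans; [apply Rmin_l|]; apply Rmin_l).
      assert (He2 : eta <= d1/2) by (unfold eta; eapply Rle_trans; [apply Rmin_l|];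
                                     eapply Rle_trans; [apply Rmin_r|]; apply Rmin_l).
      assert (He3 : eta <= d2/2) by (unfold eta; eapply Rle_trans; [apply Rmin_l|];
                                     eapply Rle_trans; [apply Rmin_r|]; apply Rmin_r).
      assert (He4 : eta <= / (2 * (L+1))) by (unfold eta; eapply Rle_trans; [apply Rmin_r|]; apply Rmin_l).
      assert (He5 : eta <= d - s) by (unfold eta; eapply Rle_trans; [apply Rmin_r|]; apply Rmin_r).
      assert (HLe : L * eta <= 1/2).
      { apply Rle_trans with (L * / (2 * (L+1))). apply Rmult_le_compat_l; lra.
        apply Rmult_le_reg_r with (2 * (L+1)). lra.
        rewrite Rmult_assoc, Rinv_l by lra. lra. }
      set (W := fun t => Rmax (u t - p t) 0).
      assert (HW : forall t, s <= t <= s + eta -> continuity_pt W t).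
      { intros t Ht. apply cont_sub_max; [apply Hu|apply Hp]; lra. }
      destruct (continuity_ab_maj W s (s + eta) ltac:(lra) HW) as [Mx [HMx HMxr]].
      set (M := W Mx).
      assert (HM0 : 0 <= M) by (unfold M, W; apply Rmax_r).
      assert (Hdini : W Mx - W s <= (L * M) * (Mx - s)).
      { apply dini_mvt. lra. intros t Ht. apply HW. lra.
        intros t Ht eps He.
        assert (Hut : Rabs (u t - p s) < r).
        { rewrite <- Heq. apply H1. rewrite Rabs_right; lra. }
        assert (Hpt : Rabs (p t - p s) < r) by (apply H2; rewrite Rabs_right; lra).
        assert (Hlip := HLip t (u t) (p t) ltac:(lra) Hut Hpt).
        destruct (HDu t ltac:(lra) (eps/2) ltac:(lra)) as [e1 [He1' Hk1]].
        destruct (HDp t ltac:(lra) (eps/2) ltac:(lra)) as [e2 [He2' Hk2]].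
        exists (Rmin (Rmin e1 e2) (/ (L + 1))). split.
        repeat apply Rmin_glb_lt; auto. apply Rinv_0_lt_compat; lra.
        intros k Hk.
        assert (Hk1' := Hk1 k ltac:(pose proof (Rmin_l (Rmin e1 e2) (/(L+1))); pose proof (Rmin_l e1 e2); lra)).
        assert (Hk2' := Hk2 k ltac:(pose proof (Rmin_l (Rmin e1 e2) (/(L+1))); pose proof (Rmin_r e1 e2); lra)).
        assert (HkL : L * k <= 1).
        { assert (k <= / (L+1)) by (pose proof (Rmin_r (Rmin e1 e2) (/(L+1))); lra).
          apply Rle_trans with ((L+1) * k). nra.
          apply Rle_trans with ((L+1) * / (L+1)). apply Rmult_le_compat_l; lra.
          rewrite Rinv_r by lra. lra. }
        assert (HWt : W t <= M) by (apply HMx; lra).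
        apply Rabs_le_between' in Hlip.
        assert (Hgk : (G t (u t) - G t (p t)) * k <= L * Rabs (u t - p t) * k) by (apply Rmult_le_compat_r; lra).
        assert (Hw : u (t + k) - p (t + k) <= u t - p t + (L * Rabs (u t - p t) + eps) * k) by nra.
        assert (Hpos : 0 <= (L * M + eps) * k) by (apply Rmult_le_pos; [pose proof (Rmult_le_pos L M HL0 HM0); lra | lra]).
        unfold W in *. unfold Rmax at 1. destruct (Rle_dec (u (t + k) - p (t + k)) 0).
        * pose proof (Rmax_r (u t - p t) 0). lra.
        * destruct (Rle_dec (u t - p t) 0).
          -- rewrite Rmax_right by lra. rewrite Rabs_left1 in Hw by lra.
             assert (H5: 0 <= - (u t - p t) * (1 - L * k)) by (apply Rmult_le_pos; lra).
             assert (H6: 0 <= L * M * k) by (apply Rmult_le_pos; [apply Rmult_le_pos|]; lra).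
             nra.
          -- rewrite Rmax_left by lra. rewrite Rabs_right in Hw by lra.
             rewrite Rmax_left in HWt by lra.
             assert (L*(u t - p t)*k <= L*M*k) by (apply Rmult_le_compat_r; [lra|apply Rmult_le_compat_l; lra]).
             nra. }
      assert (HWs : W s = 0) by (unfold W; rewrite Heq, Rminus_diag; apply Rmax_right; lra).
      assert (M <= 0).
      { rewrite HWs in Hdini. fold M in Hdini.
        assert (L * M * (Mx - s) <= M / 2).
        { apply Rle_trans with (L * M * eta). apply Rmult_le_compat_l.
          apply Rmult_le_pos; lra. lra.
          replace (L * M * eta) with (M * (L * eta)) by ring.
          apply Rle_trans with (M * (1/2)). apply Rmult_le_compat_l; lra. lra. }
        lra. }
      exists eta. split. auto. intros s' Hs'.
      assert (HW2 : W s' <= M) by (apply HMx; lra). unfold W in HW2. pose proof (Rmax_l (u s' - p s') 0). lra.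
Qed.


Unset Implicit Arguments.

Lemma cont_of_eps (X : Banach) (F : R -> X) (s : R) :
  (forall eps, 0 < eps -> exists del, 0 < del /\ forall s', Rabs (s' - s) < del -> bnorm (bsub (F s') (F s)) < eps) ->
  @continuous R_UniformSpace (X_USt X) F s.
Proof.
  intro H. apply filterlim_locally. intro eps. destruct (H eps (cond_pos eps)) as [del [Hd H2]].
  exists (mkposreal del Hd). intros y Hy. apply H2. exact Hy.
Qed.

Lemma is_derive_dif (X : Banach) (G : R -> X) t v :
  @is_derive R_AbsRing (X_NMt X) G t v -> dif G t v.
Proof.
  intros [_ Hd] eps He. specialize (Hd t (fun P H => H) (mkposreal eps He)).
  destruct Hd as [del Hdel]. exists del. split. apply cond_pos. intros s Hs.
  apply (Hdel s). exact Hs.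
Qed.

Lemma dif_shift (X : Banach) (G Y : R -> X) z0 t v (del : R) : 0 < del ->
  (forall s, Rabs (s - t) < del -> Y s = badd z0 (G s)) -> dif G t v -> dif Y t v.
Proof.
  intros Hd HY HG eps He. destruct (HG eps He) as [d1 [Hd1 H1]].
  exists (Rmin del d1). split. apply Rmin_glb_lt; auto. intros s Hs.
  rewrite !HY. rewrite bsub_plus_l. apply H1. pose proof (Rmin_r del d1); lra.
  rewrite Rminus_diag, Rabs_R0; auto. pose proof (Rmin_l del d1); lra.
Qed.

Lemma sub_add_l (X : Banach) (z i : X) : bsub (badd z i) z = i.
Proof.
  rewrite <- (badd_zero z) at 2. rewrite bsub_plus_l. apply bsub_zero_r.
Qed.

Lemma pow2_pos n : 0 < / 2 ^ n.
Proof. apply Rinv_0_lt_compat, pow_lt; lra. Qed.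

Lemma pow2_S n : / 2 ^ S n = / 2 ^ n / 2.
Proof. simpl. rewrite Rinv_mult. unfold Rdiv. ring. Qed.

Lemma le_geo (a b C : R) : 0 <= C -> (forall n, a <= b + C / 2 ^ n) -> a <= b.
Proof.
  intros HC H. apply le_epsilon. intros eps He.
  destruct (Rle_lt_or_eq_dec _ _ HC) as [HC'|<-].
  - destruct (@pow2_small (eps / C) ltac:(apply Rdiv_lt_0_compat; auto)) as [n Hn].
    specialize (H n). assert (C / 2 ^ n <= eps).
    { unfold Rdiv. apply Rmult_lt_compat_l with (r := C) in Hn; auto.
      replace (C * (eps / C)) with eps in Hn by (field; lra). lra. }
    lra.
  - specialize (H O). unfold Rdiv in H. rewrite Rmult_0_l in H. lra.
Qed.

Section Picard.
Variable X : Banach.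
Variable f : R -> X -> X.
Variables tau del r M L : R.
Variable z0 : X.
Hypothesis Hdel : 0 < del.
Hypothesis Hr : 0 < r.
Hypothesis HM : 0 <= M.
Hypothesis HL : 0 <= L.
Hypothesis HMd : M * del <= r.
Hypothesis HLd : L * del <= 1/2.
Definition Rg (t : R) (z : X) := Rabs (t - tau) <= del /\ bnorm (bsub z z0) <= r.
Hypothesis Hbound : forall t z, Rg t z -> bnorm (f t z) <= M.
Hypothesis Hlip : forall t z1 z2, Rg t z1 -> Rg t z2 -> bnorm (bsub (f t z1) (f t z2)) <= L * bnorm (bsub z1 z2).
Hypothesis Hcont : forall t z, Rg t z -> forall eps, 0 < eps -> exists eta, 0 < eta /\
   forall s w, Rg s w -> Rabs (s - t) < eta -> bnorm (bsub w z) < eta -> bnorm (bsub (f s w) (f t z)) < eps.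

Definition clamp (s : R) := Rmax (tau - del) (Rmin (tau + del) s).

Lemma clamp_in s : Rabs (clamp s - tau) <= del.
Proof. unfold clamp, Rmax, Rmin. repeat destruct Rle_dec; split_Rabs; lra. Qed.

Lemma clamp_lip s s' : Rabs (clamp s - clamp s') <= Rabs (s - s').
Proof. unfold clamp, Rmax, Rmin. repeat destruct Rle_dec; split_Rabs; lra. Qed.

Lemma clamp_id s : Rabs (s - tau) <= del -> clamp s = s.
Proof. unfold clamp, Rmax, Rmin. repeat destruct Rle_dec; split_Rabs; lra. Qed.

Definition GW (W : R -> X) := (forall t, bnorm (bsub (W t) z0) <= r) /\
  (forall t t', bnorm (bsub (W t) (W t')) <= M * Rabs (t - t')).

Definition FW (W : R -> X) (s : R) : X := f (clamp s) (W (clamp s)).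

Lemma FW_bound W : GW W -> forall s, bnorm (FW W s) <= M.
Proof. intros [H1 _] s. apply Hbound. split. apply clamp_in. apply H1. Qed.

Lemma FW_cont W : GW W -> forall s, @continuous R_UniformSpace (X_USt X) (FW W) s.
Proof.
  intros [H1 H2] s. apply cont_of_eps. intros eps He.
  destruct (Hcont (clamp s) (W (clamp s)) (conj (clamp_in s) (H1 _)) eps He) as [eta [Heta Hc]].
  exists (eta / (M + 1)). split. apply Rdiv_lt_0_compat; lra. intros s' Hs'.
  assert (Hcl : Rabs (clamp s' - clamp s) < eta / (M + 1)).
  { eapply Rle_lt_trans. apply clamp_lip. auto. }
  assert (eta / (M+1) <= eta).
  { apply Rmult_le_reg_r with (M+1). lra. unfold Rdiv. rewrite Rmult_assoc, Rinv_l by lra. nra. }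
  unfold FW. apply Hc. split. apply clamp_in. apply H1. lra.
  eapply Rle_lt_trans. apply H2.
  apply Rle_lt_trans with (M * (eta / (M + 1))). apply Rmult_le_compat_l; lra.
  apply Rmult_lt_reg_r with (M + 1). lra. unfold Rdiv.
  replace (M * (eta * / (M + 1)) * (M + 1)) with (M * eta) by (field; lra). nra.
Qed.

Lemma FW_ex W : GW W -> forall a b, ex_RInt (V := CX X) (FW W) a b.
Proof. intros HW a b. apply ex_RInt_continuous. intros z _. apply (FW_cont _ HW). Qed.

Definition Op (W : R -> X) (t : R) : X := badd z0 (RInt (V := CX X) (FW W) tau (clamp t)).

Lemma RInt_diff W a b : GW W ->
  bsub (RInt (V := CX X) (FW W) tau a) (RInt (V := CX X) (FW W) tau b) = RInt (V := CX X) (FW W) b a.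
Proof.
  intro HW. rewrite <- (RInt_Chasles (V := CX X) (FW W) tau b a) by apply (FW_ex _ HW).
  change (@minus (X_NMt X) (plus (RInt (V := CX X) (FW W) tau b) (RInt (V := CX X) (FW W) b a))
     (RInt (V := CX X) (FW W) tau b) = RInt (V := CX X) (FW W) b a).
  unfold minus. rewrite (@plus_comm (X_NMt X)), (@plus_assoc (X_NMt X)), (@plus_opp_l (X_NMt X)).
  apply (@plus_zero_l (X_NMt X)).
Qed.

Lemma RInt_bound W a b : GW W -> bnorm (RInt (V := CX X) (FW W) a b) <= Rabs (b - a) * M.
Proof.
  intro HW. apply (norm_RInt_le_const_abs (V := CX X) (FW W) a b). intros; apply (FW_bound _ HW).
  apply RInt_correct. apply (FW_ex _ HW).
Qed.

Lemma Op_GW W : GW W -> GW (Op W).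
Proof.
  intro HW. split.
  - intro t. unfold Op. rewrite sub_add_l. eapply Rle_trans. apply RInt_bound; auto.
    apply Rle_trans with (del * M). apply Rmult_le_compat_r; auto. apply clamp_in. lra.
  - intros t t'. unfold Op. rewrite bsub_plus_l. rewrite RInt_diff by auto.
    eapply Rle_trans. apply RInt_bound; auto. rewrite Rmult_comm. apply Rmult_le_compat_l; auto.
    apply clamp_lip.
Qed.

Lemma Op_diff W1 W2 D : GW W1 -> GW W2 -> (forall t, bnorm (bsub (W1 t) (W2 t)) <= D) ->
  forall t, bnorm (bsub (Op W1 t) (Op W2 t)) <= L * del * D.
Proof.
  intros H1 H2 HD t. unfold Op. rewrite bsub_plus_l.
  replace (bsub (RInt (V := CX X) (FW W1) tau (clamp t)) (RInt (V := CX X) (FW W2) tau (clamp t)))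
    with (RInt (V := CX X) (fun x => bsub (FW W1 x) (FW W2 x)) tau (clamp t)).
  2:{ apply (RInt_minus (V := CX X) (FW W1) (FW W2)); apply FW_ex; auto. }
  eapply Rle_trans. apply (norm_RInt_le_const_abs (V := CX X) (fun x => bsub (FW W1 x) (FW W2 x)) tau (clamp t) _ (L * D)).
  2:{ apply RInt_correct. apply (ex_RInt_minus (V := CX X)); apply FW_ex; auto. }
  - intros x _. unfold FW. apply Rle_trans with (L * bnorm (bsub (W1 (clamp x)) (W2 (clamp x)))).
    apply Hlip; split; try apply clamp_in; [apply (proj1 H1)|apply (proj1 H2)].
    apply Rmult_le_compat_l; auto.
  - assert (0 <= D). { eapply Rle_trans. apply (bnorm_nonneg (bsub (W1 0) (W2 0))). apply (HD 0). }
    replace (L * del * D) with (del * (L * D)) by ring. apply Rmult_le_compat_r.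
    apply Rmult_le_pos; auto. apply clamp_in.
Qed.

Fixpoint it (n : nat) : R -> X :=
  match n with O => fun _ => z0 | S k => Op (it k) end.

Lemma it_GW n : GW (it n).
Proof.
  induction n.
  - split; intros; simpl. rewrite bsub_self, bnorm_zero. lra.
    rewrite bsub_self, bnorm_zero. apply Rmult_le_pos; auto. apply Rabs_pos.
  - simpl. apply Op_GW. auto.
Qed.

Lemma it_step n t : bnorm (bsub (it (S n) t) (it n t)) <= r / 2 ^ n.
Proof.
  revert t. induction n; intro t.
  - simpl. replace (r / 1) with r by field. apply (proj1 (it_GW 1)).
  - change (bnorm (bsub (Op (it (S n)) t) (Op (it n) t)) <= r / 2 ^ S n).
    eapply Rle_trans. apply Op_diff. apply it_GW. apply it_GW. apply IHn.
    unfold Rdiv. rewrite pow2_S. assert (0 < / 2 ^ n) by apply pow2_pos.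
    apply Rle_trans with (1/2 * (r * / 2 ^ n)). apply Rmult_le_compat_r. 
    apply Rmult_le_pos; lra. auto. lra.
Qed.

Lemma it_cauchy n k t : bnorm (bsub (it (n + k) t) (it n t)) <= 2 * r * (/ 2 ^ n - / 2 ^ (n + k)).
Proof.
  induction k.
  - rewrite Nat.add_0_r, bsub_self, bnorm_zero. lra.
  - eapply Rle_trans. apply (bsub_tri _ (it (n + k) t) _).
    rewrite Nat.add_succ_r. pose proof (it_step (n + k) t). rewrite pow2_S. unfold Rdiv in *. lra.
Qed.

Lemma it_lim t : exists l, forall n, bnorm (bsub (it n t) l) <= 2 * r / 2 ^ n.
Proof.
  destruct (Xcomplete_seq (fun n => it n t)) as [l Hl].
  - intros eps He. destruct (@pow2_small (eps / (4 * r)) ltac:(apply Rdiv_lt_0_compat; lra)) as [N HN].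
    assert (HN' : 4 * r * / 2 ^ N < eps).
    { apply Rmult_lt_compat_l with (r := 4 * r) in HN. 2: lra.
      replace (4 * r * (eps / (4 * r))) with eps in HN by (field; lra). lra. }
    assert (Hb : forall n, (N <= n)%nat -> bnorm (bsub (it n t) (it N t)) <= 2 * r * / 2 ^ N).
    { intros n Hn. replace n with (N + (n - N))%nat by lia. eapply Rle_trans. apply it_cauchy.
      pose proof (pow2_pos (N + (n - N))). nra. }
    exists N. intros m n Hm Hn. simpl.
    pose proof (Hb m Hm). pose proof (Hb n Hn). pose proof (bsub_tri (it m t) (it N t) (it n t)).
    rewrite (bsub_sym (it N t)) in H1. lra.
  - exists l. intro n. apply le_epsilon. intros eps He. destruct (Hl eps He) as [N HN].
    set (m := max N n). pose proof (HN m (Nat.le_max_l _ _)).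
    assert (bnorm (bsub (it m t) (it n t)) <= 2 * r / 2 ^ n).
    { unfold m. replace (max N n) with (n + (max N n - n))%nat by lia. eapply Rle_trans. apply it_cauchy.
      pose proof (pow2_pos (n + (max N n - n))). unfold Rdiv. nra. }
    pose proof (bsub_tri (it n t) (it m t) l). rewrite (bsub_sym (it n t) (it m t)) in H1. lra.
Qed.

Theorem picard : exists Y : R -> X, Y tau = z0 /\
  forall t, Rabs (t - tau) < del -> bnorm (bsub (Y t) z0) <= r /\ has_deriv Y t (f t (Y t)).
Proof.
  destruct (choice _ it_lim) as [Y HY].
  assert (HGY : GW Y).
  { split.
    - intro t. apply (le_geo _ _ (2 * r)). lra. intro n.
      pose proof (bsub_tri (Y t) (it n t) z0). pose proof (HY t n).
      rewrite (bsub_sym (Y t) (it n t)) in H. pose proof (proj1 (it_GW n) t). unfold Rdiv in *. lra.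
    - intros t t'. apply (le_geo _ _ (4 * r)). lra. intro n.
      pose proof (bsub_tri (Y t) (it n t) (Y t')). pose proof (bsub_tri (it n t) (it n t') (Y t')).
      pose proof (HY t n). pose proof (HY t' n). rewrite (bsub_sym (Y t) (it n t)) in H.
      pose proof (proj2 (it_GW n) t t'). unfold Rdiv in *. lra. }
  assert (Hfix : forall t, Y t = Op Y t).
  { intro t. apply bsub_eq0. apply bnorm_eq0. apply Rle_antisym. 2: apply bnorm_nonneg.
    apply (le_geo _ _ (2 * r)). lra. intro n.
    pose proof (bsub_tri (Y t) (it (S n) t) (Op Y t)). pose proof (HY t (S n)).
    rewrite (bsub_sym (Y t) (it (S n) t)) in H.
    pose proof (Op_diff (it n) Y (2 * r / 2 ^ n) (it_GW n) HGY (fun t => HY t n) t).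
    unfold Rdiv in H0. rewrite pow2_S in H0. change (it (S n) t) with (Op (it n) t) in H, H0.
    assert (L * del * (2 * r / 2 ^ n) <= 1/2 * (2 * r / 2 ^ n)).
    { apply Rmult_le_compat_r. unfold Rdiv. pose proof (pow2_pos n). nra. lra. }
    unfold Rdiv in *. lra. }
  exists Y. split.
  - rewrite Hfix. unfold Op. rewrite clamp_id by (rewrite Rminus_diag, Rabs_R0; lra).
    rewrite RInt_point. apply badd_zero.
  - intros t Ht. split. apply (proj1 HGY).
    assert (Hct : clamp t = t) by (apply clamp_id; lra).
    replace (f t (Y t)) with (FW Y t) by (unfold FW; rewrite Hct; reflexivity).
    apply dif_has_deriv.
    apply (dif_shift X (fun s => RInt (V := CX X) (FW Y) tau s) Y z0 t (FW Y t) (del - Rabs (t - tau))).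
    lra.
    + intros s Hs. rewrite Hfix. unfold Op. rewrite clamp_id. reflexivity.
      pose proof (Rabs_triang (s - t) (t - tau)). replace (s - t + (t - tau)) with (s - tau) in H by ring. lra.
    + apply is_derive_dif. apply (is_derive_RInt (V := CX X) (FW Y) (fun s => RInt (V := CX X) (FW Y) tau s) tau t).
      apply filter_forall. intro b. apply RInt_correct. apply FW_ex. auto.
      apply FW_cont. auto.
Qed.
End Picard.


Unset Implicit Arguments.

Lemma Omega_open (X : Banach) T b t0 (y0 : X) : Omega T b t0 y0 ->
  exists rho, 0 < rho /\ forall t z, Rabs (t - t0) < rho -> bnorm (bsub z y0) < rho -> Omega T b t z.
Proof.
  intros [HT Hb].
  assert (Hz : forall z : X, bnorm (bsub z y0) < b - bnorm y0 -> bnorm z < b).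
  { intros z Hz. pose proof (norm_le_sub z y0). lra. }
  destruct T as [T|].
  - simpl in HT. exists (Rmin (b - bnorm y0) (T - Rabs t0)). split.
    apply Rmin_glb_lt; lra. intros t z Ht Hz'. split. simpl.
    pose proof (Rmin_r (b - bnorm y0) (T - Rabs t0)). pose proof (Rabs_triang_inv t t0). 
    pose proof (Rabs_triang (t - t0) t0). replace (t - t0 + t0) with t in H1 by ring. lra.
    apply Hz. pose proof (Rmin_l (b - bnorm y0) (T - Rabs t0)). lra.
  - exists (b - bnorm y0). split. lra. intros t z _ Hz'. split. exact I. auto.
Qed.

Lemma INR_large (C : R) : exists n : nat, C < INR n.
Proof.
  destruct (archimed C) as [H _]. destruct (Rle_or_lt 0 C).
  - exists (Z.to_nat (up C)). rewrite INR_IZR_INZ, Z2Nat.id. auto.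
    apply le_IZR. lra.
  - exists O. simpl. lra.
Qed.

Lemma LC_loc (X : Banach) T b (f : R -> X -> X) : hyp_LC T b f ->
  forall t0 y0, Omega T b t0 y0 -> exists rho Lc, 0 < rho /\ 0 <= Lc /\
    forall t z1 z2, Rabs (t - t0) < rho -> bnorm (bsub z1 y0) < rho -> bnorm (bsub z2 y0) < rho ->
      bnorm (bsub (f t z1) (f t z2)) <= Lc * bnorm (bsub z1 z2).
Proof.
  intros [_ HLC] t0 y0 HO. destruct (Omega_open X T b t0 y0 HO) as [rho0 [Hr0 HOm]].
  apply NNPP. intro Hno.
  set (rn := fun n : nat => rho0 / (INR n + 1)).
  assert (Hrn : forall n, 0 < rn n /\ rn n <= rho0).
  { intro n. unfold rn. pose proof (pos_INR n). split. apply Rdiv_lt_0_compat; lra.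
    apply Rmult_le_reg_r with (INR n + 1). lra. unfold Rdiv. rewrite Rmult_assoc, Rinv_l by lra. nra. }
  assert (Hseq : forall n : nat, exists p : R * X * X,
     Rabs (fst (fst p) - t0) < rn n /\ bnorm (bsub (snd (fst p)) y0) < rn n /\ bnorm (bsub (snd p) y0) < rn n /\
     INR n * bnorm (bsub (snd (fst p)) (snd p)) < bnorm (bsub (f (fst (fst p)) (snd (fst p))) (f (fst (fst p)) (snd p)))).
  { intro n. apply NNPP. intro Hn. apply Hno. exists (rn n), (INR n). split. apply Hrn. split. apply pos_INR.
    intros t z1 z2 H1 H2 H3. apply Rnot_lt_le. intro H4. apply Hn. exists (t, z1, z2). simpl. auto. }
  destruct (choice _ Hseq) as [p Hp].
  set (K := fun t (y : X) => (t = t0 /\ y = y0) \/ exists n, t = fst (fst (p n)) /\ (y = snd (fst (p n)) \/ y = snd (p n))).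
  assert (HKO : forall t y, K t y -> Omega T b t y).
  { intros t y [[-> ->]|[n [-> [-> | ->]]]]. auto.
    all: destruct (Hp n) as [H1 [H2 [H3 _]]]; destruct (Hrn n); apply HOm; lra. }
  assert (HKc : compact_RX K).
  { intros I U HU Hcov.
    destruct (Hcov t0 y0 (or_introl (conj eq_refl eq_refl))) as [i0 Hi0].
    destruct (HU i0 t0 y0 Hi0) as [rr [Hrr Hball]].
    destruct (INR_large (rho0 / rr)) as [N HN].
    assert (Hsmall : forall n, (N <= n)%nat -> rn n < rr).
    { intros n Hn. unfold rn. apply le_INR in Hn. pose proof (pos_INR N).
      assert (rho0 < rr * INR N).
      { apply Rmult_lt_compat_r with (r := rr) in HN. 2: lra. unfold Rdiv in HN.
        rewrite Rmult_assoc, Rinv_l in HN by lra. lra. }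
      apply Rmult_lt_reg_r with (INR n + 1). lra. unfold Rdiv. rewrite Rmult_assoc, Rinv_l by lra. nra. }
    assert (Hc1 : forall n, exists i, U i (fst (fst (p n))) (snd (fst (p n)))).
    { intro n. apply Hcov. right. exists n. auto. }
    assert (Hc2 : forall n, exists i, U i (fst (fst (p n))) (snd (p n))).
    { intro n. apply Hcov. right. exists n. auto. }
    destruct (choice _ Hc1) as [i1 Hi1]. destruct (choice _ Hc2) as [i2 Hi2].
    exists (i0 :: map i1 (seq 0 N) ++ map i2 (seq 0 N)).
    intros t y [[-> ->]|[n [-> Hy]]]. exists i0. split. left. auto. auto.
    destruct (le_lt_dec N n) as [HnN|HnN].
    - exists i0. split. left; auto. destruct (Hp n) as [H1 [H2 [H3 _]]]. pose proof (Hsmall n HnN).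
      destruct Hy as [-> | ->]; apply Hball; lra.
    - destruct Hy as [-> | ->].
      + exists (i1 n). split. right. apply in_or_app. left. apply in_map. apply in_seq. lia. auto.
      + exists (i2 n). split. right. apply in_or_app. right. apply in_map. apply in_seq. lia. auto. }
  destruct (HLC K HKc HKO) as [C [HC HCl]].
  destruct (INR_large C) as [n Hn].
  destruct (Hp n) as [_ [_ [_ H4]]].
  assert (HK1 : K (fst (fst (p n))) (snd (fst (p n)))) by (right; exists n; auto).
  assert (HK2 : K (fst (fst (p n))) (snd (p n))) by (right; exists n; auto).
  pose proof (HCl _ _ _ HK1 HK2).
  pose proof (bnorm_nonneg (bsub (snd (fst (p n))) (snd (p n)))).
  nra.
Qed.


Unset Implicit Arguments.

Lemma above_mono l a c : above l a -> a <= c -> above l c.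
Proof. destruct l; simpl; auto. lra. Qed.
Lemma below_mono u a c : below u c -> a <= c -> below u a.
Proof. destruct u; simpl; auto. lra. Qed.
Lemma below_upper u1 u2 t : below u1 t -> upper_le u1 u2 -> below u2 t.
Proof. destruct u1, u2; simpl; auto; try lra; tauto. Qed.
Lemma in_int_conv l u a c s : in_int l u a -> in_int l u c -> a <= s <= c -> in_int l u s.
Proof. intros [H1 _] [_ H2] Hs. split. eapply above_mono; eauto; lra. eapply below_mono; eauto; lra. Qed.

Lemma dif_glue (X : Banach) (A B C : R -> X) t v :
  dif A t v -> dif B t v -> (forall s, s <= t -> C s = A s) -> (forall s, t < s -> C s = B s) ->
  A t = B t -> dif C t v.
Proof.
  intros HA HB HCA HCB HAB eps He. destruct (HA eps He) as [d1 [Hd1 H1]]. destruct (HB eps He) as [d2 [Hd2 H2]].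
  exists (Rmin d1 d2). split. apply Rmin_glb_lt; auto. intros s Hs.
  pose proof (Rmin_l d1 d2). pose proof (Rmin_r d1 d2).
  rewrite (HCA t) by lra. destruct (Rle_or_lt s t).
  - rewrite HCA by auto. apply H1. lra.
  - rewrite HCB by auto. rewrite HAB. apply H2. lra.
Qed.

Lemma dif_local (X : Banach) (A C : R -> X) t v eta : 0 < eta ->
  dif A t v -> (forall s, Rabs (s - t) < eta -> C s = A s) -> dif C t v.
Proof.
  intros He0 HA HC eps He. destruct (HA eps He) as [d1 [Hd1 H1]].
  exists (Rmin d1 eta). split. apply Rmin_glb_lt; auto. intros s Hs.
  pose proof (Rmin_l d1 eta). pose proof (Rmin_r d1 eta).
  rewrite !HC. apply H1. lra. rewrite Rminus_diag, Rabs_R0. auto. lra.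
Qed.

Lemma dif_dini (X : Banach) (phi : R -> X) s v : dif phi s v ->
  forall eps, 0 < eps -> exists del, 0 < del /\ forall k, 0 < k < del ->
    bnorm (bsub (phi (s + k)) (phi s)) <= (bnorm v + eps) * k.
Proof.
  intros H0 eps He. destruct (H0 eps He) as [d [Hd H1]]. exists d. split. auto. intros k Hk.
  specialize (H1 (s + k)). replace (s + k - s) with k in H1 by ring. rewrite Rabs_right in H1 by lra.
  specialize (H1 ltac:(lra)). pose proof (norm_le_sub (bsub (phi (s + k)) (phi s)) (bscal k v)) as H.
  rewrite bnorm_scal, Rabs_right in H by lra. lra.
Qed.

Lemma deriv_dini (p : R -> R) s l : derivable_pt_lim p s l ->
  forall eps, 0 < eps -> exists del, 0 < del /\ forall k, 0 < k < del -> (l - eps) * k <= p (s + k) - p s.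
Proof.
  intros H eps He. destruct (H eps He) as [d Hd]. exists d. split. apply cond_pos. intros k Hk.
  specialize (Hd k ltac:(lra) ltac:(rewrite Rabs_right; lra)).
  apply Rabs_def2 in Hd. destruct Hd as [_ Hd].
  assert (Hk' : (l - eps) < (p (s + k) - p s) / k) by lra.
  apply Rmult_lt_compat_r with (r := k) in Hk'. 2: lra. unfold Rdiv in Hk'.
  rewrite Rmult_assoc, Rinv_l in Hk' by lra. lra.
Qed.

Lemma deriv_cont (p : R -> R) s l : derivable_pt_lim p s l -> continuity_pt p s.
Proof. intro H. apply derivable_continuous_pt. exists l. exact H. Qed.

Section Main.
Variable X : Banach.
Variables (T : option R) (a b : R) (f : R -> X -> X) (g : R -> R -> R) (x : X).
Variables (al be alt bet : option R) (phi : R -> X) (psi : R -> R).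
Hypothesis HT : pos_ext T.
Hypothesis Ha : a < 0.
Hypothesis Hb : 0 < b.
Hypothesis HLC : hyp_LC T b f.
Hypothesis HMJ : hyp_MJ T a b f g.
Hypothesis Hx : bnorm x < b.
Hypothesis Hphi : is_max_sol T b f x al be phi.
Hypothesis Hpsi : is_max_solR T a b g (bnorm x) alt bet psi.

Lemma phi_at t : in_int al be t -> Omega T b t (phi t) /\ dif phi t (f t (phi t)).
Proof.
  intro Ht. destruct Hphi as [[_ [_ H]] _]. destruct (H t Ht). split; auto. apply has_deriv_dif; auto.
Qed.

Lemma psi_at t : in_int alt bet t -> OmegaT T a b t (psi t) /\ derivable_pt_lim psi t (g t (psi t)).
Proof. intro Ht. destruct Hpsi as [[_ [_ H]] _]. apply H, Ht. Qed.

Lemma phi0 : in_int al be 0 /\ phi 0 = x.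
Proof. destruct Hphi as [[H1 [H2 _]] _]. auto. Qed.
Lemma psi0 : in_int alt bet 0 /\ psi 0 = bnorm x.
Proof. destruct Hpsi as [[H1 [H2 _]] _]. auto. Qed.

Lemma f_le_g t : 0 <= t -> in_int al be t -> in_int alt bet t -> bnorm (phi t) <= psi t ->
  bnorm (f t (phi t)) <= g t (psi t).
Proof.
  intros Ht0 H1 H2 Hle. destruct HMJ as [_ [_ [Hmono Hdom]]].
  destruct (phi_at t H1) as [HO _]. destruct (psi_at t H2) as [[_ Hpb] _].
  eapply Rle_trans. apply Hdom. auto. rewrite Rabs_right by lra.
  apply Hmono; auto. destruct HO as [HO _]. rewrite Rabs_right in HO by lra. auto.
  apply bnorm_nonneg. lra.
Qed.

Lemma comp_main d : 0 <= d -> in_int al be d -> in_int alt bet d ->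
  forall s, 0 <= s <= d -> bnorm (phi s) <= psi s.
Proof.
  intros Hd H1 H2.
  assert (I1 : forall s, 0 <= s <= d -> in_int al be s) by (intros; eapply in_int_conv; [apply phi0|apply H1|auto]).
  assert (I2 : forall s, 0 <= s <= d -> in_int alt bet s) by (intros; eapply in_int_conv; [apply psi0|apply H2|auto]).
  apply (compare (fun s => bnorm (phi s)) psi g 0 d); auto.
  - intros s Hs. apply norm_cont_pt. eapply dif_cont. apply phi_at, I1, Hs.
  - intros s Hs. eapply deriv_cont. apply psi_at, I2, Hs.
  - rewrite (proj2 phi0), (proj2 psi0). lra.
  - intros s Hs eps He. destruct (phi_at s (I1 s ltac:(lra))) as [HO Hd'].
    destruct (dif_dini _ _ _ _ Hd' eps He) as [del [Hdel Hk]]. exists del. split. auto.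
    intros k Hk'. specialize (Hk k Hk'). pose proof (norm_le_sub (phi (s + k)) (phi s)).
    destruct HMJ as [_ [_ [_ Hdom]]]. pose proof (Hdom s (phi s) HO). rewrite Rabs_right in H0 by lra.
    assert ((bnorm (f s (phi s)) + eps) * k <= (g s (bnorm (phi s)) + eps) * k) by (apply Rmult_le_compat_r; lra).
    lra.
  - intros s Hs eps He. apply deriv_dini. apply psi_at, I2. lra. auto.
  - intros s Hs. destruct (psi_at s (I2 s ltac:(lra))) as [[HTs [Hpa Hpb]] _].
    destruct HMJ as [_ [HgL _]].
    destruct (HgL s (psi s) (conj HTs (conj Hpa Hpb))) as [r [L [Hr HL]]].
    set (rT := match T with Some T' => T' - Rabs s | None => 1 end).
    assert (HrT : 0 < rT) by (unfold rT; destruct T; simpl in HTs; lra).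
    set (r' := Rmin (Rmin r rT) (Rmin (psi s - a) (b - psi s))).
    assert (Hr' : 0 < r') by (unfold r'; repeat apply Rmin_glb_lt; lra).
    assert (Hr1 : r' <= r) by (unfold r'; eapply Rle_trans; [apply Rmin_l|apply Rmin_l]).
    assert (Hr2 : r' <= rT) by (unfold r'; eapply Rle_trans; [apply Rmin_l|apply Rmin_r]).
    assert (Hr3 : r' <= psi s - a) by (unfold r'; eapply Rle_trans; [apply Rmin_r|apply Rmin_l]).
    assert (Hr4 : r' <= b - psi s) by (unfold r'; eapply Rle_trans; [apply Rmin_r|apply Rmin_r]).
    exists r', (Rmax L 0). split. auto. split. apply Rmax_r.
    intros t z1 z2 Ht Hz1 Hz2.
    assert (HOt : forall z, Rabs (z - psi s) < r' -> OmegaT T a b t z).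
    { intros z Hz. apply Rabs_def2 in Hz. split. 2: lra.
      unfold rT in Hr2. destruct T; simpl; auto. simpl in Hr2, HTs.
      rewrite Rabs_right in HTs, Hr2 by lra. rewrite Rabs_right by lra. lra. }
    eapply Rle_trans. apply HL; auto. rewrite Rabs_right; lra. lra. lra.
    apply Rmult_le_compat_r. apply Rabs_pos. apply Rmax_l.
Qed.


Lemma incr t s : 0 <= t <= s -> in_int al be s -> in_int alt bet s ->
  bnorm (bsub (phi s) (phi t)) <= psi s - psi t.
Proof.
  intros Hts H1 H2.
  assert (I1 : forall r, 0 <= r <= s -> in_int al be r) by (intros; eapply in_int_conv; [apply phi0|apply H1|auto]).
  assert (I2 : forall r, 0 <= r <= s -> in_int alt bet r) by (intros; eapply in_int_conv; [apply psi0|apply H2|auto]).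
  pose (h := fun r => bnorm (bsub (phi r) (phi t)) - psi r).
  assert (h s - h t <= 0 * (s - t)).
  { apply dini_mvt. lra.
    - intros r Hr. unfold h. apply continuity_pt_minus.
      + apply norm_cont_pt. destruct (phi_at r (I1 r ltac:(lra))) as [_ Hd].
        pose proof (dif_cont Hd) as Hc. intros eps He. destruct (Hc eps He) as [d [Hd0 Hd1]].
        exists d. split; auto. intros y Hy. rewrite bsub_sub_sub. auto.
      + eapply deriv_cont. apply psi_at, I2. lra.
    - intros r Hr eps He. destruct (phi_at r (I1 r ltac:(lra))) as [_ Hd].
      destruct (dif_dini _ _ _ _ Hd (eps/2) ltac:(lra)) as [d1 [Hd1 Hk1]].
      destruct (deriv_dini _ _ _ (proj2 (psi_at r (I2 r ltac:(lra)))) (eps/2) ltac:(lra)) as [d2 [Hd2 Hk2]].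
      exists (Rmin d1 d2). split. apply Rmin_glb_lt; auto. intros k Hk.
      pose proof (Rmin_l d1 d2). pose proof (Rmin_r d1 d2).
      specialize (Hk1 k ltac:(lra)). specialize (Hk2 k ltac:(lra)).
      pose proof (f_le_g r ltac:(lra) (I1 r ltac:(lra)) (I2 r ltac:(lra))
                    (comp_main s ltac:(lra) H1 H2 r ltac:(lra))) as Hfg.
      pose proof (norm_rev (bsub (phi (r + k)) (phi t)) (bsub (phi r) (phi t))) as Hn.
      rewrite bsub_sub_sub in Hn. apply Rabs_le_between' in Hn.
      assert ((bnorm (f r (phi r)) + eps/2) * k <= (g r (psi r) + eps/2) * k) by (apply Rmult_le_compat_r; lra).
      unfold h. nra. }
  unfold h in H. rewrite bsub_self, bnorm_zero in H. lra.
Qed.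


Lemma ext_contra beta : be = Some beta -> below bet beta -> False.
Proof.
  intros Hbe Hbb.
  assert (Hb0 : 0 < beta) by (pose proof (proj2 (proj1 phi0)) as H; rewrite Hbe in H; exact H).
  assert (Ib : in_int alt bet beta) by (split; [eapply above_mono; [apply (proj1 (proj1 psi0))|lra]|auto]).
  assert (Iphi : forall s, 0 <= s < beta -> in_int al be s).
  { intros s Hs. split. eapply above_mono. apply (proj1 (proj1 phi0)). lra. rewrite Hbe. simpl. lra. }
  assert (Ipsi : forall s, 0 <= s <= beta -> in_int alt bet s) by (intros; eapply in_int_conv; [apply psi0|apply Ib|auto]).
  destruct (psi_at beta Ib) as [[HTb [Hpa Hpb]] Hpd].
  pose proof (cont_pt_to psi beta (deriv_cont _ _ _ Hpd)) as Hpc.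
  assert (Hinc : forall t s, 0 <= t <= s -> s < beta -> bnorm (bsub (phi s) (phi t)) <= psi s - psi t).
  { intros t s H1 H2. apply incr; auto. apply Iphi; lra. apply Ipsi; lra. }
  assert (Hinc' : forall t s, 0 <= t < beta -> 0 <= s < beta -> bnorm (bsub (phi s) (phi t)) <= Rabs (psi s - psi t)).
  { intros t s H1 H2. destruct (Rle_or_lt t s).
    - eapply Rle_trans. apply Hinc; lra. apply Rle_abs.
    - rewrite bsub_sym. eapply Rle_trans. apply Hinc; lra. rewrite Rabs_minus_sym. apply Rle_abs. }
  set (sn := fun n : nat => beta - beta / (INR n + 2)).
  assert (Hsn : forall n, beta / 2 <= sn n < beta).
  { intro n. unfold sn. pose proof (pos_INR n). split.
    - assert (beta / (INR n + 2) <= beta / 2).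
      { unfold Rdiv. apply Rmult_le_compat_l. lra. apply Rinv_le_contravar; lra. }
      lra.
    - assert (0 < beta / (INR n + 2)) by (apply Rdiv_lt_0_compat; lra). lra. }
  assert (Hsn2 : forall eta, 0 < eta -> exists N, forall n, (N <= n)%nat -> beta - sn n < eta).
  { intros eta He. destruct (INR_large (beta / eta)) as [N HN]. exists N. intros n Hn. pose proof (pos_INR n). pose proof (pos_INR N).
    unfold sn. apply le_INR in Hn. replace (beta - (beta - beta / (INR n + 2))) with (beta / (INR n + 2)) by ring.
    apply Rmult_lt_reg_r with (INR n + 2). lra. unfold Rdiv. rewrite Rmult_assoc, Rinv_l by lra.
    apply Rmult_lt_compat_r with (r := eta) in HN; auto. unfold Rdiv in HN.
    rewrite Rmult_assoc, Rinv_l in HN by lra. nra. }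
  destruct (Xcomplete_seq (fun n => phi (sn n))) as [y Hy].
  { intros eps He. destruct (Hpc (eps/2) ltac:(lra)) as [d [Hd Hd1]].
    destruct (Hsn2 d Hd) as [N HN]. exists N. intros m n Hm Hn.
    pose proof (Hsn m). pose proof (Hsn n). pose proof (HN m Hm). pose proof (HN n Hn).
    eapply Rle_lt_trans. apply Hinc'; lra.
    pose proof (Hd1 (sn m) ltac:(rewrite Rabs_left; lra)). pose proof (Hd1 (sn n) ltac:(rewrite Rabs_left; lra)).
    apply Rabs_def2 in H3. apply Rabs_def2 in H4. apply Rabs_def1; lra. }
  assert (Hyc : forall s, 0 <= s < beta -> bnorm (bsub (phi s) y) <= Rabs (psi beta - psi s)).
  { intros s Hs. apply le_epsilon. intros eps He.
    destruct (Hpc (eps/2) ltac:(lra)) as [d [Hd Hd1]].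
    destruct (Hy (eps/2) ltac:(lra)) as [N1 HN1].
    destruct (Hsn2 (Rmin d (beta - s)) ltac:(apply Rmin_glb_lt; lra)) as [N2 HN2].
    set (n := max N1 N2). pose proof (HN1 n (Nat.le_max_l _ _)). pose proof (HN2 n (Nat.le_max_r _ _)).
    pose proof (Rmin_l d (beta - s)). pose proof (Rmin_r d (beta - s)). pose proof (Hsn n).
    pose proof (Hinc s (sn n) ltac:(lra) ltac:(lra)).
    pose proof (Hd1 (sn n) ltac:(rewrite Rabs_left; lra)). apply Rabs_def2 in H5.
    pose proof (bsub_tri (phi s) (phi (sn n)) y). rewrite (bsub_sym (phi s) (phi (sn n))) in H6.
    pose proof (Rle_abs (psi beta - psi s)). lra. }
  assert (Hyb : bnorm y <= psi beta).
  { apply le_epsilon. intros eps He. destruct (Hpc (eps/2) ltac:(lra)) as [d [Hd Hd1]].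
    set (s := Rmax 0 (beta - d / 2)).
    assert (Hs : 0 <= s < beta /\ beta - s < d).
    { unfold s. split. split. apply Rmax_l. apply Rmax_lub_lt; lra. pose proof (Rmax_r 0 (beta - d/2)). lra. }
    pose proof (Hyc s (proj1 Hs)) as E1. pose proof (comp_main s ltac:(lra) (Iphi s ltac:(lra)) (Ipsi s ltac:(lra)) s ltac:(lra)) as E2.
    pose proof (Hd1 s ltac:(rewrite Rabs_left; lra)) as E3. pose proof (norm_le_sub y (phi s)) as E4.
    rewrite bsub_sym in E4. rewrite Rabs_minus_sym in E1. pose proof (Rabs_def2 _ _ E3). lra. }
  assert (HOy : Omega T b beta y).
  { split. rewrite Rabs_right by lra. rewrite Rabs_right in HTb by lra. exact HTb. lra. }
  destruct HLC as [Hfc HfL].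
  destruct (Omega_open X T b beta y HOy) as [rho1 [Hr1 HO1]].
  destruct (Hfc beta y HOy 1 ltac:(lra)) as [rho2 [Hr2 HO2]].
  destruct (LC_loc X T b f (conj Hfc HfL) beta y HOy) as [rho3 [Lc [Hr3 [HLc HO3]]]].
  set (R0 := Rmin (Rmin rho1 rho2) rho3).
  assert (HR0 : 0 < R0) by (unfold R0; repeat apply Rmin_glb_lt; lra).
  assert (HR1 : R0 <= rho1) by (unfold R0; eapply Rle_trans; [apply Rmin_l|apply Rmin_l]).
  assert (HR2 : R0 <= rho2) by (unfold R0; eapply Rle_trans; [apply Rmin_l|apply Rmin_r]).
  assert (HR3 : R0 <= rho3) by (unfold R0; apply Rmin_r).
  set (M := bnorm (f beta y) + 1).
  assert (HM : 0 < M) by (unfold M; pose proof (bnorm_nonneg (f beta y)); lra).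
  set (r := R0 / 2).
  set (del := Rmin (R0 / 4) (Rmin (r / (M + 1)) (/ (2 * (Lc + 1))))).
  assert (Hdel : 0 < del) by (unfold del, r; repeat apply Rmin_glb_lt; try apply Rdiv_lt_0_compat; try apply Rinv_0_lt_compat; lra).
  assert (Hd1 : del <= R0 / 4) by (unfold del; apply Rmin_l).
  assert (Hd2 : del <= r / (M + 1)) by (unfold del; eapply Rle_trans; [apply Rmin_r|apply Rmin_l]).
  assert (Hd3 : del <= / (2 * (Lc + 1))) by (unfold del; eapply Rle_trans; [apply Rmin_r|apply Rmin_r]).
  assert (HMd : M * del <= r).
  { apply Rle_trans with (M * (r / (M + 1))). apply Rmult_le_compat_l; lra.
    apply Rmult_le_reg_r with (M + 1). lra. unfold Rdiv.
    replace (M * (r * / (M + 1)) * (M + 1)) with (M * r) by (field; lra). unfold r. nra. }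
  assert (HLd : Lc * del <= 1 / 2).
  { apply Rle_trans with (Lc * / (2 * (Lc + 1))). apply Rmult_le_compat_l; lra.
    apply Rmult_le_reg_r with (2 * (Lc + 1)). lra.
    rewrite Rmult_assoc, Rinv_l by lra. lra. }
  destruct (Hpc (R0 / 2) ltac:(lra)) as [dp [Hdp Hdp1]].
  set (tau := beta - Rmin (Rmin (del / 2) dp) beta / 2).
  assert (Hmin : 0 < Rmin (Rmin (del / 2) dp) beta) by (repeat apply Rmin_glb_lt; lra).
  assert (Htau : beta / 2 <= tau < beta /\ beta - tau <= del / 4 /\ beta - tau < dp).
  { unfold tau. pose proof (Rmin_r (Rmin (del / 2) dp) beta). pose proof (Rmin_l (Rmin (del / 2) dp) beta).
    pose proof (Rmin_l (del/2) dp). pose proof (Rmin_r (del/2) dp). lra. }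
  set (z0 := phi tau).
  assert (Hz0 : bnorm (bsub z0 y) < R0 / 2).
  { eapply Rle_lt_trans. apply Hyc. lra. rewrite Rabs_minus_sym. apply Hdp1. rewrite Rabs_left; lra. }
  assert (HRg : forall t z, Rg X tau del r z0 t z -> Rabs (t - beta) < R0 /\ bnorm (bsub z y) < R0).
  { intros t z [H1 H2]. split.
    - pose proof (Rabs_triang (t - tau) (tau - beta)). replace (t - tau + (tau - beta)) with (t - beta) in H by ring.
      rewrite (Rabs_left1 (tau - beta)) in H by lra. lra.
    - pose proof (bsub_tri z z0 y). unfold r in H2. lra. }
  assert (HRgO : forall t z, Rg X tau del r z0 t z -> Omega T b t z).
  { intros t z HR. destruct (HRg t z HR). apply HO1; lra. }
  destruct (picard X f tau del r M Lc z0 Hdel ltac:(unfold r; lra) ltac:(lra) HLc HMd HLd) as [Y [HY0 HY]].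
  - intros t z HR. destruct (HRg t z HR). pose proof (HO2 t z (HRgO t z HR) ltac:(lra) ltac:(lra)).
    pose proof (norm_le_sub (f t z) (f beta y)). unfold M. lra.
  - intros t z1 z2 H1 H2. destruct (HRg t z1 H1). destruct (HRg t z2 H2). apply HO3; lra.
  - intros t z HR eps He. destruct (Hfc t z (HRgO t z HR) eps He) as [eta [Heta Hf]].
    exists eta. split. auto. intros s0 w HRw Hs Hw. apply Hf; auto.
  - set (phi2 := fun t => if Rle_dec t tau then phi t else Y t).
    assert (Hsol : is_sol T b f x al (Some (tau + del)) phi2).
    { split. split. apply (proj1 (proj1 phi0)). simpl. lra.
      split. unfold phi2. destruct (Rle_dec 0 tau). apply phi0. lra.
      intros t [Hta Htb]. simpl in Htb.
      destruct (Rlt_le_dec t tau) as [Hlt|Hge].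
      - assert (It : in_int al be t) by (split; auto; rewrite Hbe; simpl; lra).
        destruct (phi_at t It) as [HO Hd].
        assert (E : phi2 t = phi t) by (unfold phi2; destruct (Rle_dec t tau); auto; lra).
        rewrite E. split. auto. apply dif_has_deriv.
        apply (dif_local X phi phi2 t _ (tau - t)). lra. auto.
        intros s0 Hs0. unfold phi2. destruct (Rle_dec s0 tau); auto. apply Rabs_def2 in Hs0. lra.
      - destruct (Rle_lt_or_eq_dec _ _ Hge) as [Hgt|Heq].
        + assert (E : phi2 t = Y t) by (unfold phi2; destruct (Rle_dec t tau); auto; lra).
          destruct (HY t ltac:(rewrite Rabs_right; lra)) as [HYr HYd].
          rewrite E. split. apply HRgO. split. rewrite Rabs_right; lra. auto.
          apply dif_has_deriv. apply (dif_local X Y phi2 t _ (t - tau)). lra.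
          apply has_deriv_dif. auto.
          intros s0 Hs0. unfold phi2. destruct (Rle_dec s0 tau); auto. apply Rabs_def2 in Hs0. lra.
        + subst t. assert (E : phi2 tau = phi tau) by (unfold phi2; destruct (Rle_dec tau tau); auto; lra).
          assert (It : in_int al be tau) by (apply Iphi; lra).
          destruct (phi_at tau It) as [HO Hd].
          destruct (HY tau ltac:(rewrite Rminus_diag, Rabs_R0; lra)) as [_ HYd].
          rewrite E. split. auto. apply dif_has_deriv.
          apply (dif_glue X phi Y phi2 tau). auto.
          apply has_deriv_dif. rewrite HY0 in HYd. exact HYd.
          intros s0 Hs0. unfold phi2. destruct (Rle_dec s0 tau) as [Hq|Hq]. reflexivity. exfalso. apply Hq. exact Hs0.
          intros s0 Hs0. unfold phi2. destruct (Rle_dec s0 tau) as [Hq|Hq]. exfalso. lra. reflexivity.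
          rewrite HY0. reflexivity. }
    destruct Hphi as [_ Hmax]. destruct (Hmax _ _ _ Hsol) as [_ Hup]. rewrite Hbe in Hup. simpl in Hup. lra.
Qed.


Lemma main_sec : upper_le bet be /\ (forall t, 0 <= t -> below bet t -> bnorm (phi t) <= psi t).
Proof.
  assert (Hup : upper_le bet be).
  { pose proof ext_contra as EC. clear -EC. destruct be as [beta|].
    - destruct bet as [beta'|]; simpl.
      + apply Rnot_lt_le. intro H. apply (EC beta). auto. simpl. exact H.
      + apply (EC beta). auto. exact I.
    - destruct bet; exact I. }
  split. auto. intros t Ht0 Htb.
  assert (I1 : in_int al be t) by (split; [eapply above_mono; [apply (proj1 (proj1 phi0))|lra] | eapply below_upper; eauto]).
  assert (I2 : in_int alt bet t) by (split; [eapply above_mono; [apply (proj1 (proj1 psi0))|lra] | auto]).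
  apply (comp_main t Ht0 I1 I2 t). lra.
Qed.

End Main.

Theorem mainTheorem7 (X : Banach) (T : option R) (a b : R)
    (f : R -> X -> X) (g : R -> R -> R) (x : X)
    (al be alt bet : option R) (phi : R -> X) (psi : R -> R) :
  pos_ext T -> a < 0 -> 0 < b ->
  hyp_LC T b f -> hyp_MJ T a b f g ->
  bnorm x < b ->
  is_max_sol T b f x al be phi ->
  is_max_solR T a b g (bnorm x) alt bet psi ->
  upper_le bet be /\
  (forall t, 0 <= t -> below bet t -> bnorm (phi t) <= psi t).
Proof. intros. eapply main_sec; eauto. Qed.
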